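(* Let $0<\sigma<\tau$, let $\kappa_\sigma,\kappa_2$ satisfy $0<\kappa_\sigma<\kappa_2<1$, and let $\omega_\sigma>0$. Let \[ \sigma<t_2\le\min\Bigl\{\sigma+\frac{\kappa_\sigma}{2\omega_\sigma},\,\tau\Bigr\},\qquad 0<\omega\le\frac{\kappa_2-\kappa_\sigma}{t_2-\sigma}, \] and \[ \mu^\star(\kappa_2,\kappa_\sigma,t_2,\omega_\sigma):=\frac{\kappa_2-\kappa_\sigma+(t_2-\sigma)\omega_\sigma}{g_*(\kappa_\sigma/2,\kappa_2)\int_\sigma^{t_2}A^-(\sigma,\xi)\,d\xi}. \] Then for every $\mu>\mu^\star(\kappa_2,\kappa_\sigma,t_2,\omega_\sigma)$, any solution $(x(t),y(t))$ on $[\sigma,\tau]$ of \[ x'=y,\qquad y'=\mu a^-(t)g(x) \] with $x(\sigma)=\kappa_\sigma$ and $y(\sigma)\ge-\omega_\sigma$ satisfies $x(t_2)>\kappa_2$ and $y(t_2)>\omega$.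
   Context: $a\in L^1(\sigma,\tau)$ with negative part $a^-\ge0$, and $A^-(t',t''):=\int_{t'}^{t''}a^-(\xi)\,d\xi$; it is assumed that $A^-(\sigma,t)>0$ for all $t\in(\sigma,\tau]$. $g\colon\mathbb{R}\to[0,+\infty)$ is the extension by zero outside $[0,1]$ of a locally Lipschitz continuous function $g\colon[0,1]\to[0,+\infty)$ with $g(0)=g(1)=0$, $g(s)>0$ for $0<s<1$ and $\lim_{s\to0^+}g(s)/s=0$. For $0\le\kappa'<\kappa''\le1$, $g_*(\kappa',\kappa''):=\min_{s\in[\kappa',\kappa'']}g(s)$. Solutions are in the Carathéodory sense. *)

(* Defs.v *)
From HB Require Import structures.
From mathcomp Require Import all_boot all_order all_algebra.
From mathcomp Require Import all_classical all_reals all_analysis.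
Set Implicit Arguments. Unset Strict Implicit. Unset Printing Implicit Defensive.
Import Order.TTheory GRing.Theory Num.Theory.
Import numFieldNormedType.Exports.
Local Open Scope classical_set_scope.
Local Open Scope ring_scope.

Notation leb := (@lebesgue_measure _).

Definition negpart {R : realType} (a : R -> R) : R -> R :=
  fun t => Num.max (- a t) 0.

Definition Aneg {R : realType} (a : R -> R) (t1 t2 : R) : R :=
  Rintegral leb `[t1, t2] (negpart a).

Definition g_hyp {R : realType} (g : R -> R) : Prop :=
  (forall s, (s < 0) || (1 < s) -> g s = 0) /\
  [/\ (forall s, 0 <= g s),
      (forall s, 0 <= s <= 1 -> exists2 d : R, 0 < d & exists L : R,
         forall u v, 0 <= u <= 1 -> 0 <= v <= 1 ->
           `|u - s| < d -> `|v - s| < d -> `|g u - g v| <= L * `|u - v|),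
      g 0 = 0 /\ g 1 = 0,
      (forall s, 0 < s < 1 -> 0 < g s) &
      (fun s => g s / s) x @[x --> 0^'+] --> (0 : R)].

(* g_*(k', k'') = min_{s in [k', k'']} g(s) (attained since g is continuous) *)
Definition gstar {R : realType} (g : R -> R) (k1 k2 : R) : R :=
  inf [set g s | s in `[k1, k2]].

(* Caratheodory solution on [sigma, tau] of x' = y, y' = mu a^-(t) g(x):
   x, y absolutely continuous with the equations a.e., written in the
   equivalent integral form with integrable right-hand sides. *)
Definition cara_sol {R : realType} (sigma tau mu : R) (a g : R -> R)
  (x y : R -> R) : Prop :=
  [/\ leb.-integrable `[sigma, tau] (EFin \o y),
      leb.-integrable `[sigma, tau] (fun t => (mu * negpart a t * g (x t))%:E),
      (forall t, sigma <= t <= tau ->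
         x t = x sigma + Rintegral leb `[sigma, t] y) &
      (forall t, sigma <= t <= tau ->
         y t = y sigma + Rintegral leb `[sigma, t]
                           (fun s => mu * negpart a s * g (x s)))].

Definition mustar {R : realType} (sigma : R) (a g : R -> R)
  (k2 ks t2 ws : R) : R :=
  (k2 - ks + (t2 - sigma) * ws) /
  (gstar g (ks / 2) k2 * Rintegral leb `[sigma, t2] (fun xi => Aneg a sigma xi)).

(* Main.v *)
Require Import Defs.
From HB Require Import structures.
From mathcomp Require Import all_boot all_order all_algebra.
From mathcomp Require Import all_classical all_reals all_analysis.
From mathcomp Require Import measurable_realfun ring lra.
Import Order.TTheory GRing.Theory Num.Theory.
Local Open Scope classical_set_scope.
Local Open Scope ring_scope.

Module Helpers.
Import numFieldNormedType.Exports.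

Section H.
Context {R : realType}.
Implicit Types (f : R -> R).

Lemma mitv (a b : R) : measurable `[a, b].
Proof. exact: measurable_itv. Qed.

Lemma Rint_mono f (s m1 m2 : R) :
  leb.-integrable `[s, m2] (EFin \o f) ->
  (forall u, s <= u <= m2 -> 0 <= f u) -> m1 <= m2 ->
  Rintegral leb `[s, m1] f <= Rintegral leb `[s, m2] f.
Proof.
move=> itf f0 m12.
have [sm1|m1s] := leP s m1.
  rewrite -subr_ge0 (@Rintegral_itvB _ f (BLeft s) (BRight m2) m1) //; try by rewrite bnd_simp.
  apply: Rintegral_ge0 => u /=; rewrite in_itv /= => /andP[m1u um2].
  apply: f0; rewrite um2 andbT; apply: le_trans sm1 _; exact: ltW.
rewrite set_itv_ge; last by rewrite bnd_simp -ltNge.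
rewrite Rintegral_set0; apply: Rintegral_ge0 => u /=; rewrite in_itv /=.
exact: f0.
Qed.

Lemma bounded_by (A : set R) f (M : R) :
  (forall u, A u -> `|f u| <= M) -> [bounded f u | u in A].
Proof.
move=> hM; rewrite /bounded_near /=; near=> M' => u Au.
apply: le_trans (hM u Au) _.
near: M'; apply: nbhs_pinfty_ge; exact: num_real.
Unshelve. all: end_near.
Qed.

Lemma integrable_cst_itv (a b c : R) :
  leb.-integrable `[a, b] (EFin \o (fun _ => c)).
Proof.
apply: measurable_bounded_integrable => //.
  have hm := (lebesgue_measure_itv (Interval (BLeft a) (BRight b)) : leb `[a, b] = _).
  set S := `[a, b]%classic.
  suff : (leb S < +oo)%E by [].
  by rewrite hm; case: ifP => _ //; rewrite -EFinD ltry.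
by apply: bounded_by => u _; exact: lexx.
Qed.

Lemma Rint_cst_itv (a b c : R) : a <= b ->
  Rintegral leb `[a, b] (fun _ => c) = c * (b - a).
Proof.
move=> ab; have hm := (lebesgue_measure_itv (Interval (BLeft a) (BRight b)) : leb `[a, b] = _).
rewrite Rintegral_cst //.
transitivity (c * fine (leb `[a, b])); first by [].
rewrite hm /=.
rewrite lte_fin; case: ltgtP ab => //=; last by move=> -> _; rewrite subrr.

Qed.

End H.

Lemma g_cont {R : realType} (g : R -> R) s : g_hyp g -> 0 < s < 1 ->
  {for s, continuous g}.
Proof.
move=> [_ [_ lip _ _ _]] /andP[s0 s1].
have [d d0 [L hL]] := lip s ltac:(by rewrite !ltW).
apply/cvgrPdist_le => e e0.
set del := Num.min (Num.min d s) (Num.min (1 - s) (e / (`|L| + 1))).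
have del0 : 0 < del.
  by rewrite !lt_min d0 s0 subr_gt0 s1 divr_gt0 // ltr_pwDr.
exists del => // t /= hst.
move: hst; rewrite !lt_min => /andP[/andP[hd hs] /andP[h1 he]].
have t01 : 0 <= t <= 1.
  move: hs h1; rewrite !ltr_norml => /andP[hs1 hs2] /andP[h11 h12].
  apply/andP; split; lra.
have s01 : 0 <= s <= 1 by rewrite !ltW.
have := hL s t s01 t01; rewrite subrr normr0 => /(_ d0).
rewrite distrC => /(_ hd) h.
apply: le_trans h _.
apply: le_trans (_ : `|L| * `|s - t| <= _).
  by apply: ler_wpM2r => //; exact: ler_norm.
have hq : e / (`|L| + 1) * (`|L| + 1) = e.
  by rewrite divfK // gt_eqF // ltr_pwDr.
move: he hq; set q := e / (`|L| + 1) => he hq.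
have := normr_ge0 L; have := normr_ge0 (s - t); nra.
Qed.

Lemma gstar_pos {R : realType} (g : R -> R) k1 k2 : g_hyp g -> 0 < k1 -> k1 <= k2 -> k2 < 1 ->
  0 < gstar g k1 k2 /\ (forall s, k1 <= s <= k2 -> gstar g k1 k2 <= g s).
Proof.
move=> hg k10 k12 k21.
have cg : {within `[k1, k2], continuous g}.
  apply: continuous_in_subspaceT => s; rewrite inE /= in_itv /= => /andP[h1 h2].
  apply: g_cont => //; apply/andP; split; first exact: lt_le_trans h1.
  exact: le_lt_trans k21.
have [c cin cmin] := EVT_min k12 cg.
have hlb : lbound [set g s | s in `[k1, k2]] (g c).
  by move=> _ [s sin <-]; apply: cmin.
have hpos : 0 < g c.
  case: hg => _ [_ _ _ gp _]; apply: gp; move: cin; rewrite in_itv /= => /andP[h1 h2].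
  apply/andP; split; [exact: lt_le_trans h1|exact: le_lt_trans k21].
split.
  apply: lt_le_trans hpos _; apply: lb_le_inf => //.
  by exists (g c); exists c => //; move: cin; rewrite inE.
move=> s hs; apply: ge_inf; first by exists (g c).
by exists s => //=; rewrite in_itv.
Qed.

Section A.
Context {R : realType}.
Implicit Types (a : R -> R).

Lemma sub_cc (p q c d : R) : c <= p -> q <= d -> `[p, q] `<=` `[c, d].
Proof. by move=> cp qd; apply: subset_itv; rewrite bnd_simp. Qed.

Lemma negpart_ge0 a u : 0 <= negpart a u.
Proof. by rewrite /negpart le_max lexx orbT. Qed.

Lemma negpart_int a s t : leb.-integrable `[s, t] (EFin \o a) ->
  leb.-integrable `[s, t] (EFin \o negpart a).
Proof.
move=> ia; apply: eq_integrable (integrable_funeneg _ ia) => //= u _.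
by rewrite funenegE /negpart EFin_max EFinN.
Qed.

Lemma Aneg_ge0 a s t : 0 <= Aneg a s t.
Proof. by apply: Rintegral_ge0 => u _; exact: negpart_ge0. Qed.

Lemma Aneg_mono a s tau m1 m2 : leb.-integrable `[s, tau] (EFin \o a) ->
  m1 <= m2 -> m2 <= tau -> Aneg a s m1 <= Aneg a s m2.
Proof.
move=> ia m12 m2t; apply: Rint_mono => //.
  have hs : `[s, m2] `<=` `[s, tau] by apply: sub_cc.
  apply: (@integrableS _ _ _ leb `[s, tau]) => //. exact: negpart_int.
by move=> u _; exact: negpart_ge0.
Qed.


Lemma Aneg_int a s tau t2 : leb.-integrable `[s, tau] (EFin \o a) -> t2 <= tau ->
  leb.-integrable `[s, t2] (EFin \o Aneg a s).
Proof.
move=> ia t2t.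
have mB : measurable_fun `[s, t2] (fun u => Aneg a s (Num.min u t2)).
  apply: nondecreasing_measurable => // u v uv.
  have := @Aneg_mono a s tau (Num.min u t2) (Num.min v t2) ia; apply.
    by rewrite le_min !ge_min uv lexx orbT.
  by rewrite ge_min t2t orbT.
have mA : measurable_fun `[s, t2] (Aneg a s).
  apply: eq_measurable_fun mB => u; rewrite inE /= in_itv /= => /andP[_ ut].
  by rewrite (min_l ut).
apply: measurable_bounded_integrable => //.
  have hm := (lebesgue_measure_itv (Interval (BLeft s) (BRight t2)) : leb `[s, t2] = _).
  set S := `[s, t2]%classic.
  suff : (leb S < +oo)%E by [].
  by rewrite hm; case: ifP => _ //; rewrite -EFinD ltry.
apply: (@bounded_by _ _ _ (Aneg a s t2)) => u; rewrite /= in_itv /= => /andP[_ ut].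
rewrite ger0_norm; last exact: Aneg_ge0.
exact: (@Aneg_mono a s tau _ _ ia).
Qed.

End A.

Lemma Ipos (R : realType) (a : R -> R) sigma tau t2 :
  leb.-integrable `[sigma, tau] (EFin \o a) ->
  (forall t, sigma < t <= tau -> 0 < Aneg a sigma t) -> sigma < t2 -> t2 <= tau ->
  0 < Rintegral leb `[sigma, t2] (fun xi => Aneg a sigma xi).
Proof.
move=> ia Apos st2 t2t.
set I := Rintegral leb `[sigma, t2] (fun xi => Aneg a sigma xi).
have iA := @Aneg_int R a sigma tau t2 ia t2t.
  pose m := (sigma + t2) / 2.
have hm1 : sigma <= m by rewrite /m; lra.
have hm2 : m <= t2 by rewrite /m; lra.
have hmt : 0 < t2 - sigma - (m - sigma) by rewrite /m; lra.
have Am0 : 0 < Aneg a sigma m by apply: Apos; apply/andP; split; rewrite /m; lra.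
have := @Rintegral_itvB R (Aneg a sigma) (BLeft sigma) (BRight t2) m iA.
rewrite !bnd_simp => /(_ hm1 hm2) hB.
have h1 : 0 <= Rintegral leb `[sigma, m] (Aneg a sigma).
  by apply: Rintegral_ge0 => u _; exact: Aneg_ge0.
have icst : leb.-integrable `]m, t2] (EFin \o (fun _ => Aneg a sigma m)).
  apply: (@integrableS _ _ _ leb `[sigma, t2]) => //.
    by apply: subset_itv; rewrite bnd_simp.
  exact: integrable_cst_itv.
have h2 : Rintegral leb `]m, t2] (fun _ => Aneg a sigma m) <=
          Rintegral leb `]m, t2] (Aneg a sigma).
  apply: le_Rintegral => //.
    apply: (@integrableS _ _ _ leb `[sigma, t2]) => //.
    by apply: subset_itv; rewrite bnd_simp.
  move=> u /=; rewrite in_itv /= => /andP[mu1 ut].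
  exact: (@Aneg_mono R a sigma tau _ _ ia (ltW mu1) (le_trans ut t2t)).
have := @Rintegral_itvB R (fun _ => Aneg a sigma m) (BLeft sigma) (BRight t2) m
  (integrable_cst_itv _ _ _).
rewrite !bnd_simp => /(_ hm1 hm2).
rewrite (Rint_cst_itv _ _ _ (ltW st2)) (Rint_cst_itv _ _ _ hm1) => hC.
rewrite -hC in h2.
have : 0 < Aneg a sigma m * (t2 - sigma) - Aneg a sigma m * (m - sigma).
  by rewrite -mulrBr; apply: mulr_gt0.
have -> : I = Rintegral leb `[sigma, t2] (Aneg a sigma) by [].
move: hB h1 h2; clear.
set P := Rintegral _ _ _; set Q := Rintegral _ _ _; set S := Rintegral _ _ _.
set T := _ * _ - _ => hB h1 h2 hT.
lra.
Qed.

End Helpers.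
Import Helpers.

Theorem lemma2p7 (R : realType) (sigma tau : R) (a g : R -> R)
  (ks k2 ws t2 w mu : R) (x y : R -> R) :
  0 < sigma -> sigma < tau ->
  (@lebesgue_measure R).-integrable `[sigma, tau] (EFin \o a) ->
  (forall t, sigma < t <= tau -> 0 < Aneg a sigma t) ->
  g_hyp g ->
  0 < ks -> ks < k2 -> k2 < 1 -> 0 < ws ->
  sigma < t2 -> t2 <= Num.min (sigma + ks / (2 * ws)) tau ->
  0 < w -> w <= (k2 - ks) / (t2 - sigma) ->
  mustar sigma a g k2 ks t2 ws < mu ->
  cara_sol sigma tau mu a g x y ->
  x sigma = ks -> - ws <= y sigma ->
  k2 < x t2 /\ w < y t2.
Proof.
move=> s0 st ia Apos hg ks0 ksk2 k21 ws0 st2 t2le w0 wle mugt [iy iF hx hy] xs ys.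
move: t2le; rewrite le_min => /andP[t2a t2t].
have [G0 Gle] := @gstar_pos R g (ks / 2) k2 hg ltac:(lra) ltac:(lra) k21.
move: mugt Gle G0; rewrite /mustar; set G := gstar g (ks / 2) k2 => mugt Gle G0.
set I := Rintegral leb `[sigma, t2] (fun xi => Aneg a sigma xi).
have iA := @Aneg_int R a sigma tau t2 ia t2t.
have I0 := @Ipos R a sigma tau t2 ia Apos st2 t2t.
pose N := k2 - ks + (t2 - sigma) * ws.
have N0 : 0 < N.
  have : 0 < (t2 - sigma) * ws by apply: mulr_gt0 => //; rewrite subr_gt0.
  rewrite /N; clear -ksk2; lra.
have GI0 : 0 < G * I by apply: mulr_gt0.
have muN : N < mu * (G * I) by rewrite -ltr_pdivrMr.
have mu0 : 0 <= mu.
  apply: ltW; apply: lt_trans mugt; exact: divr_gt0.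
have Fge0 : forall u, 0 <= mu * negpart a u * g (x u).
  move=> u; apply: mulr_ge0; first exact: mulr_ge0 mu0 (negpart_ge0 _ _).
  by case: hg => _ [].
have iFt : forall t, t <= tau ->
    leb.-integrable `[sigma, t] (EFin \o (fun u => mu * negpart a u * g (x u))).
  move=> t tt; apply: (@integrableS _ _ _ leb `[sigma, tau]) => //.
  by apply: sub_cc.
have iyt : forall t, t <= tau -> leb.-integrable `[sigma, t] (EFin \o y).
  move=> t tt; apply: (@integrableS _ _ _ leb `[sigma, tau]) => //.
  by apply: sub_cc.
have yge : forall t, sigma <= t <= tau -> - ws <= y t.
  move=> t ht; rewrite (hy t ht); apply: le_trans ys _.
  by rewrite lerDl; apply: Rintegral_ge0 => u _.
have ymono : forall s t, sigma <= s -> s <= t -> t <= tau -> y s <= y t.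
  move=> s t hs st' tt.
  rewrite (hy s) ?hs ?(le_trans st' tt) // (hy t) ?(le_trans hs st') //.
  rewrite lerD2l; apply: Rint_mono => //; exact: iFt.
have hwt : ws * (t2 - sigma) <= ks / 2.
  have e : ws * (ks / (2 * ws)) = ks / 2.
    have wsn : ws != 0 by rewrite gt_eqF.
    by field.
  rewrite -e; apply: ler_wpM2l; first exact: ltW.
  clear -t2a; lra.
have xlb : forall t, sigma <= t <= t2 -> ks / 2 <= x t.
  move=> t /andP[ht1 ht2].
  rewrite (hx t); last by rewrite ht1 (le_trans ht2 t2t).
  rewrite xs.
  have : Rintegral leb `[sigma, t] (fun _ => - ws) <= Rintegral leb `[sigma, t] y.
    apply: le_Rintegral => //.
    - exact: integrable_cst_itv.
    - exact: iyt (le_trans ht2 t2t).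
    move=> u /=; rewrite in_itv /= => /andP[hu1 hu2].
    by apply: yge; rewrite hu1 (le_trans hu2 (le_trans ht2 t2t)).
  rewrite Rint_cst_itv //.
  have : ws * (t - sigma) <= ws * (t2 - sigma).
    by apply: ler_wpM2l; [exact: ltW | clear -ht2; lra].
  move: hwt; clear; set J := Rintegral _ _ _; lra.
have hx2 : x t2 = ks + Rintegral leb `[sigma, t2] y.
  by rewrite (hx t2) ?xs // (ltW st2) t2t.
have xt2 : k2 < x t2.
  rewrite ltNge; apply/negP => hle.
  have xle : forall s, sigma <= s <= t2 -> x s <= k2.
    move=> s /andP[hs1 hs2]; rewrite leNgt; apply/negP => hxs.
    have [r [/andP[hr1 hr2] yr]] : exists r, sigma <= r <= s /\ 0 < y r.
      apply: contrapT => hn.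
      have hn' : forall r, sigma <= r <= s -> y r <= 0.
        move=> r hr; rewrite leNgt; apply/negP => yr; apply: hn; exists r; split.
          exact: hr.
        exact: yr.
      have : Rintegral leb `[sigma, s] y <= Rintegral leb `[sigma, s] (fun _ => 0).
        apply: le_Rintegral => //.
        - exact: iyt (le_trans hs2 t2t).
        - exact: integrable_cst_itv.
      rewrite Rint_cst_itv // mul0r.
      move: hxs; rewrite (hx s) ?hs1 ?(le_trans hs2 t2t) // xs.
      move: ksk2; clear; set J := Rintegral _ _ _; lra.
    have := @Rintegral_itvB R y (BLeft sigma) (BRight t2) s (iyt t2 t2t).
    rewrite !bnd_simp => /(_ hs1 hs2) hB.
    have : 0 <= Rintegral leb `]s, t2] y.
      apply: Rintegral_ge0 => u /=; rewrite in_itv /= => /andP[hu1 hu2].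
      apply: le_trans (ltW yr) _; apply: ymono => //.
        exact: le_trans hr2 (ltW hu1).
      exact: le_trans hu2 t2t.
    rewrite -hB.
    move: hle hxs; rewrite hx2 (hx s) ?hs1 ?(le_trans hs2 t2t) // xs.
    clear; set J1 := Rintegral _ _ _; set J2 := Rintegral _ _ _; lra.
  have gge : forall u, sigma <= u <= t2 -> G <= g (x u).
    move=> u hu; apply: Gle; rewrite xlb //; exact: xle.
  have iN : forall t, t <= tau ->
      leb.-integrable `[sigma, t] (EFin \o negpart a).
    move=> t tt; apply: (@integrableS _ _ _ leb `[sigma, tau]) => //.
      by apply: sub_cc.
    exact: negpart_int.
  have ylow : forall u, sigma <= u <= t2 -> - ws + mu * G * Aneg a sigma u <= y u.
    move=> u /andP[hu1 hu2].
    have hut : u <= tau by exact: le_trans hu2 t2t.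
    rewrite (hy u) ?hu1 // lerD //.
    rewrite /Aneg -RintegralZl //; last exact: iN.
    apply: le_Rintegral => //.
    - apply: eq_integrable (integrableZl _ (mu * G) (iN u hut)) => //= v _; rewrite ?EFinM.
    - exact: iFt hut.
    move=> v /=; rewrite in_itv /= => /andP[hv1 hv2].
    rewrite mulrAC -[X in X <= _]mulrA -[X in _ <= X]mulrA.
    apply: ler_wpM2l => //.
    apply: (@ler_wpM2l _ (negpart a v)); first exact: negpart_ge0.
    apply: gge; rewrite hv1 /=; exact: le_trans hv2 hu2.
  have iZ : leb.-integrable `[sigma, t2]
      (EFin \o (fun u => mu * G * Aneg a sigma u)).
    apply: eq_integrable (integrableZl _ (mu * G) iA) => //= v _.
  have iC := integrable_cst_itv sigma t2 (- ws).
  have e : Rintegral leb `[sigma, t2] (fun u => - ws + mu * G * Aneg a sigma u)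
      = - ws * (t2 - sigma) + mu * G * I.
    rewrite RintegralD // Rint_cst_itv ?(ltW st2) // RintegralZl //.
  have : Rintegral leb `[sigma, t2] (fun u => - ws + mu * G * Aneg a sigma u)
      <= Rintegral leb `[sigma, t2] y.
    apply: le_Rintegral => //.
    - apply: eq_integrable (integrableD _ iC iZ) => //= v _.
    - exact: iyt t2t.
  rewrite e.
  move: hle muN; rewrite hx2 /N.
  clear; set J := Rintegral _ _ _.
  have -> : mu * G * I = mu * (G * I) by rewrite mulrA.
  set K := mu * (G * I); lra.
split => //.
have d0 : 0 < t2 - sigma by rewrite subr_gt0.
have : Rintegral leb `[sigma, t2] y <= Rintegral leb `[sigma, t2] (fun _ => y t2).
  apply: le_Rintegral => //.
  - exact: iyt t2t.
  - exact: integrable_cst_itv.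
  move=> v; rewrite /= in_itv /= => /andP[hv1 hv2].
  exact: ymono hv1 hv2 t2t.
rewrite Rint_cst_itv ?(ltW st2) //.
have : w * (t2 - sigma) <= k2 - ks by rewrite -ler_pdivlMr.
move: xt2 d0; rewrite hx2; clear; set J := Rintegral _ _ _.
set d := t2 - sigma; nra.
Qed.
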